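(* Let $A=B^\top B+E$ where $B\in\mathbb{R}^{n\times d}$, $E\in\mathbb{R}^{d\times d}$ is symmetric with $\max_{i,j}|E_{ij}|\le a$, and $B^\top B$ has a $k$-sparse unit eigenvector $v$ corresponding to its largest eigenvalue $\lambda_1=\lambda_1(B^\top B)$. Let $\lambda_2=\lambda_2(B^\top B)$ be the second largest eigenvalue and assume $\lambda_1-\lambda_2>0$. Let $W^*$ be an optimal solution to $\max\,\mathrm{tr}(AW)$ s.t. $\mathrm{tr}(W)=1$, $\sum_{i,j}|W_{ij}|\le k$, $W\succeq0$. Then $$\|W^*-vv^\top\|_F\le\frac{2ak}{\lambda_1-\lambda_2}+\sqrt{\frac{2ak}{\lambda_1-\lambda_2}}.$$
   Context: A vector is $k$-sparse if it has at most $k$ nonzero entries; $\|\cdot\|_F$ is the Frobenius norm. *)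

(* Defs.v *)
From mathcomp Require Import all_boot all_order all_algebra.
Set Implicit Arguments. Unset Strict Implicit. Unset Printing Implicit Defensive.
Import Order.TTheory GRing.Theory Num.Theory.
Local Open Scope ring_scope.

Definition frob (R : rcfType) (m n : nat) (X : 'M[R]_(m, n)) : R :=
  Num.sqrt (\sum_(i < m) \sum_(j < n) X i j ^+ 2).

Definition sqnorm (R : rcfType) (d : nat) (v : 'cV[R]_d) : R :=
  \sum_(i < d) v i 0 ^+ 2.

Definition ksparse (R : rcfType) (d : nat) (k : nat) (v : 'cV[R]_d) : Prop :=
  (#|[set i : 'I_d | v i ord0 != 0%R]| <= k)%N.

Definition symmx (R : rcfType) (d : nat) (M : 'M[R]_d) : Prop := M^T = M.

Definition psd (R : rcfType) (d : nat) (W : 'M[R]_d) : Prop :=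
  symmx W /\ forall x : 'cV[R]_d, 0 <= (x^T *m W *m x) 0 0.

(* s is the list of eigenvalues of M, with multiplicity, in nonincreasing order:
   s_0 = lambda_1 >= s_1 = lambda_2 >= ... *)
Definition sorted_eigenvalues (R : rcfType) (d : nat) (M : 'M[R]_d) (s : seq R) : Prop :=
  char_poly M = \prod_(x <- s) ('X - x%:P) /\ sorted (fun x y => y <= x) s.

Definition feasible (R : rcfType) (d : nat) (k : nat) (W : 'M[R]_d) : Prop :=
  \tr W = 1 /\ \sum_(i < d) \sum_(j < d) `|W i j| <= k%:R /\ psd W.

Definition optimal (R : rcfType) (d : nat) (k : nat) (A W : 'M[R]_d) : Prop :=
  feasible k W /\ forall W' : 'M[R]_d, feasible k W' -> \tr (A *m W') <= \tr (A *m W).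

(* Main.v *)
Require Import Defs.
From mathcomp Require Import all_boot all_order all_algebra.
From mathcomp Require Import complex spectral sesquilinear ring lra.
Import Order.TTheory GRing.Theory Num.Theory Num.Def.
Local Open Scope ring_scope.

Section Spec.
Local Open Scope sesquilinear_scope.
Variable R : rcfType.
Local Notation f := (real_complex R).

Lemma conjC_f (x : R) : conjC (f x) = f x.
Proof. change ((x%:C)%C^*%C = x%:C%C). by rewrite conjc_real. Qed.

Lemma term (ai bi aj bj w : R) :
  (ai +i* bi)%C * f w * conjC (aj +i* bj)%C =
  f (w * (ai * aj + bi * bj)) + 'i%C * f (w * (bi * aj - ai * bj)).
Proof.
change (conjC (aj +i* bj)%C) with (aj -i* bj)%C.
simpc. apply/eqP; rewrite eq_complex /=; apply/andP; split; apply/eqP; ring.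
Qed.

Lemma quad_c d (W : 'M[R]_d) (p : 'I_d -> R[i]) : W^T = W ->
  \sum_j (\sum_i p i * f (W i j)) * conjC (p j) =
  f (\sum_j (\sum_i complex.Re (p i) * W i j) * complex.Re (p j) +
     \sum_j (\sum_i complex.Im (p i) * W i j) * complex.Im (p j)).
Proof.
move=> WT.
have e1 : forall i j, p i * f (W i j) * conjC (p j) =
  f (W i j * (complex.Re (p i) * complex.Re (p j) + complex.Im (p i) * complex.Im (p j)))
  + 'i%C * f (W i j * (complex.Im (p i) * complex.Re (p j) - complex.Re (p i) * complex.Im (p j))).
  move=> i j; case: (p i) => ai bi; case: (p j) => aj bj /=; exact: term.
under eq_bigr do rewrite mulr_suml.
under eq_bigr do under eq_bigr do rewrite e1.
set Re := @complex.Re R; set Im := @complex.Im R.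
transitivity (f (\sum_j \sum_i W i j * (Re (p i) * Re (p j) + Im (p i) * Im (p j)))
  + 'i%C * f (\sum_j \sum_i W i j * (Im (p i) * Re (p j) - Re (p i) * Im (p j)))).
  rewrite !rmorph_sum mulr_sumr -big_split; apply: eq_bigr => j _.
  by rewrite !rmorph_sum mulr_sumr -big_split.
have -> : \sum_j \sum_i W i j * (Im (p i) * Re (p j) - Re (p i) * Im (p j)) = 0.
  under eq_bigr do under eq_bigr do rewrite mulrBr.
  under eq_bigr do rewrite sumrB.
  rewrite sumrB; apply/eqP; rewrite subr_eq0; apply/eqP; rewrite exchange_big /=; apply: eq_bigr => i _; apply: eq_bigr => j _.
  have := congr1 (fun X : 'M[R]_d => X i j) WT; rewrite mxE => ->; ring.
rewrite rmorph0 mulr0 addr0; congr f.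
rewrite -big_split; apply: eq_bigr => j _ /=.
rewrite !mulr_suml -big_split; apply: eq_bigr => i _ /=; ring.
Qed.

Lemma char_poly_conj (F : comNzRingType) n (A Q Qi : 'M[F]_n) :
  Qi *m Q = 1%:M -> char_poly (Qi *m A *m Q) = char_poly A.
Proof.
move=> QQ.
have e : char_poly_mx (Qi *m A *m Q) =
   map_mx polyC Qi *m char_poly_mx A *m map_mx polyC Q.
  rewrite /char_poly_mx mulmxBr mulmxBl -!map_mxM.
  rewrite mul_mx_scalar -scalemxAl -map_mxM QQ map_mx1.
  by rewrite scalemx1.
rewrite /char_poly e !det_mulmx mulrC mulrA -det_mulmx -map_mxM.
by rewrite [Q *m Qi]mulmx1C // map_mx1 det1 mul1r.
Qed.

Lemma tr_map d (A : 'M[R]_d) : \tr (map_mx f A) = f (\tr A).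
Proof. by rewrite /mxtrace rmorph_sum; apply: eq_bigr => i _; rewrite mxE. Qed.

Lemma ctr_mul m n p (A : 'M[R[i]]_(m, n)) (B : 'M[R[i]]_(n, p)) :
  ((A *m B)^t*)%sesqui = (B^t* *m A^t*)%sesqui.
Proof. by rewrite -!map_trmx map_mxM trmx_mul. Qed.

Lemma spec_decomp d (M W : 'M[R]_d) (v : 'cV[R]_d) (s : seq R) :
  M^T = M -> char_poly M = \prod_(x <- s) ('X - x%:P) -> sorted (fun x y => y <= x) s ->
  M *m v = s`_0 *: v -> \sum_(i < d) v i 0 ^+ 2 = 1 -> s`_1 < s`_0 -> W^T = W ->
  (forall x : 'cV[R]_d, 0 <= (x^T *m W *m x) 0 0) ->
  exists (dr q : 'I_d -> R) (k0 : 'I_d),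
   [/\ \tr (M *m W) = \sum_k dr k * q k, \tr W = \sum_k q k,
       (v^T *m W *m v) 0 0 = q k0,
       (forall k, 0 <= q k) & dr k0 = s`_0 /\ forall k, k != k0 -> dr k <= s`_1].
Proof.
move=> MT cpM srt Mv nv gap WT Wpsd.
have [sf c1] : (forall y, y \in s -> y != s`_0 -> y <= s`_1) /\ count_mem s`_0 s = 1%N.
  case: s srt gap {cpM Mv} => [|x [|y r]] /=; first by rewrite ltxx.
    by move=> _ _; split => [z|]; rewrite ?inE ?eqxx // => /eqP ->; rewrite eqxx.
  move=> /andP [yx pr] gxy.
  have allr : all (fun z => z <= y) r.
    by apply: (order_path_min (leT := fun a b => b <= a)) => // a b c ab bc; exact: le_trans bc ab.
  split.
    move=> z; rewrite !inE => /orP [/eqP -> |/orP [/eqP -> //|zr]]; first by rewrite eqxx.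
    by move=> _; exact: (allP allr).
  rewrite /= eqxx (lt_eqF gxy) /=.
  have -> : count (pred1 x) r = 0%N.
    apply/eqP; rewrite -leqn0 leqNgt -has_count; apply/hasPn => z zr /=.
    by apply/negP => /eqP zx; move: (allP allr z zr); rewrite zx leNgt gxy.
  by [].
pose Mc := map_mx f M; pose Wc := map_mx f W; pose vc := map_mx f v.
have McT : Mc^t* = Mc.
  apply/matrixP => i j; rewrite !mxE conjC_f.
  by have := congr1 (fun X : 'M[R]_d => X i j) MT; rewrite mxE => ->.
have Mn : Mc \is normalmx by apply/normalmxP; rewrite McT.
have /orthomx_spectralP McE0 := Mn.
set P := spectralmx Mc in McE0; set D := spectral_diag Mc in McE0.
have Pu : P \is unitarymx := spectral_unitarymx Mc.
have PPs : P *m P^t* = 1%:M by apply/unitarymxP.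
have PsP : P^t* *m P = 1%:M by rewrite -(invmx_unitary Pu) mulVmx // unitarymx_unit.
have McE : Mc = P^t* *m diag_mx D *m P by rewrite {1}McE0 invmx_unitary.
have pe : perm_eq [seq D 0 k | k <- enum 'I_d] (map f s).
  apply: prod_XsubC_eq; rewrite enumT !big_map.
  rewrite -(map_prod_XsubC f) -cpM map_char_poly -/Mc McE char_poly_conj //.
  rewrite char_poly_trig ?diag_mx_is_trig //.
  by apply: eq_bigr => k _; rewrite mxE eqxx mulr1n.
pose w := P *m vc.
have Mvc : Mc *m vc = f s`_0 *: vc by rewrite -map_mxM Mv map_mxZ.
have PMc : P *m Mc = diag_mx D *m P by rewrite McE !mulmxA PPs mul1mx.
have Dw : forall k, D 0 k * w k 0 = f s`_0 * w k 0.
  move=> k; have : diag_mx D *m w = f s`_0 *: w.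
    by rewrite /w mulmxA -PMc -mulmxA Mvc scalemxAr.
  by move/(congr1 (fun X : 'cV[R[i]]_d => X k 0)); rewrite mul_diag_mx !mxE.
have vcC : vc^t* = vc^T by apply/matrixP => i j; rewrite !mxE conjC_f.
have nvc : (vc^T *m vc) 0 0 = 1.
  rewrite mxE -(rmorph1 f) -nv rmorph_sum; apply: eq_bigr => i _.
  by rewrite !mxE rmorphXn /= expr2.
have wC : w^t* = vc^T *m P^t* by rewrite /w ctr_mul vcC.
have nw : (w^t* *m w) 0 0 = 1.
  by rewrite wC /w mulmxA -(mulmxA _ _ P) PsP mulmx1 nvc.
have [k0 wk0] : exists k0, w k0 0 != 0.
  case: (pickP (fun k => w k 0 != 0)) => [k0 Hk0|H0]; first by exists k0.
  move: nw; rewrite mxE big1 => [/eqP|j _]; first by rewrite eq_sym oner_eq0.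
  by move: (H0 j) => /negbFE/eqP ->; rewrite mulr0.
have Dk0 : D 0 k0 = f s`_0 by apply: (mulIf wk0); rewrite Dw.
have uniqD : forall k, k != k0 -> D 0 k != f s`_0.
  move=> k kk0; apply/negP => /eqP Dk.
  have := (permP pe) (pred1 (f s`_0)).
  rewrite count_map [in RHS]count_map.
  have -> : count (preim f (pred1 (f s`_0))) s = 1%N.
    by rewrite -c1; apply: eq_count => x /=; rewrite (inj_eq (fmorph_inj f)).
  rewrite -sum1_count enumT (bigD1 k0) /= ?Dk0 ?eqxx // (bigD1 k) /= ?Dk ?eqxx ?kk0 //.
have wz : forall k, k != k0 -> w k 0 = 0.
  move=> k kk0; have := Dw k; move/eqP; rewrite -subr_eq0 -mulrBl mulf_eq0 subr_eq0.
  by rewrite (negbTE (uniqD k kk0)) /= => /eqP.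
have Dreal : forall k, exists2 y, y \in s & D 0 k = f y.
  move=> k; have : D 0 k \in map f s.
    by rewrite -(perm_mem pe); apply: map_f; rewrite mem_enum.
  by move/mapP => [y ys ->]; exists y.
pose dr := fun k => complex.Re (D 0 k).
have Ddr : forall k, D 0 k = f (dr k) by move=> k; rewrite /dr; case: (Dreal k) => y _ ->.
pose G := P *m Wc *m P^t*.
pose a := fun k => \col_j complex.Re (P k j).
pose b := fun k => \col_j complex.Im (P k j).
have GkE : forall k, G k k = f (((a k)^T *m W *m a k) 0 0 + ((b k)^T *m W *m b k) 0 0).
  move=> k; have := @quad_c _ W (fun i => P k i) WT; rewrite /= => qc.
  transitivity (\sum_j (\sum_i P k i * f (W i j)) * conjC (P k j)).
    rewrite /G /Wc mxE; apply: eq_bigr => j _; rewrite !mxE; congr (_ * _).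
    by apply: eq_bigr => i _; rewrite !mxE.
  rewrite qc; congr f.
  by rewrite !mxE; congr (_ + _); apply: eq_bigr => j _; rewrite !mxE; congr (_ * _);
     apply: eq_bigr => i _; rewrite !mxE.
pose q := fun k => complex.Re (G k k).
have Gfq : forall k, G k k = f (q k) by move=> k; rewrite /q GkE.
have q0 : forall k, 0 <= q k by move=> k; rewrite /q GkE /=; apply: addr_ge0.
have trM : \tr (M *m W) = \sum_k dr k * q k.
  apply: complexI; transitivity (\tr (map_mx f (M *m W))); first by rewrite tr_map.
  rewrite map_mxM -/Mc -/Wc McE.
  rewrite -!mulmxA mxtrace_mulC -mulmxA -/G.
  rewrite /mxtrace rmorph_sum; apply: eq_bigr => k _.
  by rewrite mul_diag_mx mxE Gfq Ddr rmorphM.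
have trW : \tr W = \sum_k q k.
  apply: complexI; transitivity (\tr (map_mx f W)); first by rewrite tr_map.
  rewrite -/Wc rmorph_sum.
  have -> : \tr Wc = \tr G by rewrite /G mxtrace_mulC mulmxA PsP mul1mx.
  by apply: eq_bigr => k _; rewrite Gfq.
have wCe : forall i, (w^t*) 0 i = conjC (w i 0).
  by move=> i; rewrite mxE [in LHS]mxE.
have nw' : (w^t*) 0 k0 * w k0 0 = 1.
  move: nw; rewrite mxE (bigD1 k0) //= big1 ?addr0 // => j jk0.
  by rewrite wz // mulr0.
have alpha : (v^T *m W *m v) 0 0 = q k0.
  apply: complexI.
  transitivity ((map_mx f (v^T *m W *m v)) 0 0); first by rewrite [RHS]mxE.
  rewrite !map_mxM -map_trmx -/Wc -/vc.
  have -> : vc^T *m Wc *m vc = w^t* *m G *m w.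
    rewrite wC /G /w !mulmxA -[vc^T *m P^t* *m P]mulmxA PsP mulmx1.
    by rewrite -[vc^T *m Wc *m P^t* *m P]mulmxA PsP mulmx1.
  rewrite mxE (bigD1 k0) //= big1 ?addr0 => [|j jk0]; last by rewrite wz // mulr0.
  rewrite mxE (bigD1 k0) //= big1 ?addr0 => [|i ik0]; last first.
    by rewrite wCe wz // rmorph0 mul0r.
  by rewrite mulrAC nw' mul1r Gfq.
exists dr, q, k0; split => //; split.
  by apply: complexI; rewrite -Ddr Dk0.
move=> k kk0; case: (Dreal k) => y ys Dy.
have -> : dr k = y by apply: complexI; rewrite -Ddr.
apply: sf => //; apply/eqP => ys0; move: (uniqD k kk0); by rewrite Dy ys0 eqxx.
Qed.
End Spec.

Section Real.
Variable R : rcfType.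

Lemma cs (I : finType) (x y : I -> R) :
  (\sum_i x i * y i) ^+ 2 <= (\sum_i x i ^+ 2) * (\sum_i y i ^+ 2).
Proof.
have H : 0 <= \sum_i \sum_j (x i * y j - x j * y i) ^+ 2.
  by apply: sumr_ge0 => i _; apply: sumr_ge0 => j _; apply: sqr_ge0.
have e1 : forall i j, (x i * y j - x j * y i) ^+ 2 =
    (x i ^+ 2 * y j ^+ 2 + x j ^+ 2 * y i ^+ 2) - 2 * ((x i * y i) * (x j * y j)).
  by move=> i j; ring.
have E : \sum_i \sum_j (x i * y j - x j * y i) ^+ 2 =
   \sum_i \sum_j x i ^+ 2 * y j ^+ 2 + \sum_i \sum_j x j ^+ 2 * y i ^+ 2
   - \sum_i \sum_j 2 * ((x i * y i) * (x j * y j)).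
  rewrite -big_split -sumrB /=; apply: eq_bigr => i _.
  by rewrite -big_split -sumrB /=; apply: eq_bigr => j _; exact: e1.
rewrite E in H.
have s1 : \sum_i \sum_j x i ^+ 2 * y j ^+ 2 = (\sum_i x i ^+ 2) * (\sum_i y i ^+ 2).
  by rewrite mulr_suml; apply: eq_bigr => i _; rewrite mulr_sumr.
have s2 : \sum_i \sum_j x j ^+ 2 * y i ^+ 2 = (\sum_i x i ^+ 2) * (\sum_i y i ^+ 2).
  by rewrite exchange_big /=; exact: s1.
have s3 : \sum_i \sum_j 2 * ((x i * y i) * (x j * y j)) = 2 * (\sum_i x i * y i) ^+ 2.
  transitivity (2 * \sum_i \sum_j (x i * y i) * (x j * y j)).
    by rewrite mulr_sumr; apply: eq_bigr => i _; rewrite mulr_sumr.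
  by congr (2 * _); rewrite expr2 mulr_suml; apply: eq_bigr => i _; rewrite mulr_sumr.
rewrite s1 s2 s3 in H; lra.
Qed.

Lemma quad_delta d (W : 'M[R]_d) i j p q :
  let x : 'cV[R]_d := p *: delta_mx i 0 + q *: delta_mx j 0 in
  (x^T *m W *m x) 0 0 = p ^+ 2 * W i i + p * q * (W i j + W j i) + q ^+ 2 * W j j.
Proof.
move=> x.
have eij : forall a b : 'I_d, ((delta_mx a 0 : 'cV[R]_d)^T *m W *m (delta_mx b 0 : 'cV[R]_d)) 0 0 = W a b.
  by move=> a b; rewrite trmx_delta -rowE -colE !mxE.
have eA : forall (A B : 'M[R]_1), (A + B) 0 0 = A 0 0 + B 0 0 by move=> A B; rewrite mxE.
have eZ : forall c (A : 'M[R]_1), (c *: A) 0 0 = c * A 0 0 by move=> c A; rewrite mxE.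
rewrite /x !linearD /= !linearZ /= !mulmxDl -!scalemxAl !(eA, eZ, eij); ring.
Qed.

Lemma psd_entry d (W : 'M[R]_d) i j : psd W -> W i j ^+ 2 <= W i i * W j j.
Proof.
move=> [WT Wq].
have Wji : W j i = W i j by have := congr1 (fun X : 'M[R]_d => X i j) WT; rewrite mxE.
have Q : forall p q, 0 <= p ^+ 2 * W i i + p * q * (W i j + W i j) + q ^+ 2 * W j j.
  by move=> p q; have := Wq (p *: delta_mx i 0 + q *: delta_mx j 0); rewrite quad_delta Wji.
set a := W i i in Q *; set b := W i j in Q *; set c := W j j in Q *.
have ha : 0 <= a by have := Q 1 0; nra.
have hc : 0 <= c by have := Q 0 1; nra.
have h1 : 0 <= a * (a * c - b ^+ 2) by have := Q b (- a); nra.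
have h2 : 0 <= c * (a * c - b ^+ 2) by have := Q c (- b); nra.
have h3 : 0 <= a - 2 * b ^+ 2 + b ^+ 2 * c by have := Q 1 (- b); nra.
have [a0|a0] := ltP 0 a.
  by rewrite -subr_ge0; rewrite pmulr_rge0 in h1.
have az : a = 0 by apply/le_anti; rewrite a0 ha.
have [c0|c0] := ltP 0 c.
  by rewrite -subr_ge0; rewrite pmulr_rge0 in h2.
have cz : c = 0 by apply/le_anti; rewrite c0 hc.
rewrite az cz in h3 *; nra.
Qed.

Lemma frobW d (W : 'M[R]_d) : psd W -> \tr W = 1 -> \sum_i \sum_j W i j ^+ 2 <= 1.
Proof.
move=> Wp trW.
apply: (@le_trans _ _ (\sum_i \sum_j W i i * W j j)).
  by apply: ler_sum => i _; apply: ler_sum => j _; apply: psd_entry.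
rewrite -(expr1n _ 2) -trW expr2 /mxtrace mulr_suml.
by apply: ler_sum => i _; rewrite mulr_sumr.
Qed.

End Real.

Lemma eB (R : rcfType) m n (A B : 'M[R]_(m, n)) i j : (A - B) i j = A i j - B i j.
Proof. by rewrite !mxE. Qed.

Lemma final_ineq (R : rcfType) (f r : R) : 0 <= f -> 0 <= r -> f ^+ 2 <= r ^+ 2 * (1 + f) -> f <= r ^+ 2 + r.
Proof. move=> *; nra. Qed.

Lemma sq_le (R : rcfType) (x y : R) : 0 <= y -> x ^+ 2 <= y ^+ 2 -> x <= y.
Proof. move=> *; nra. Qed.

Theorem proposition7 (R : rcfType) (n d k : nat) (a : R)
    (B : 'M[R]_(n, d)) (E : 'M[R]_d) (v : 'cV[R]_d) (s : seq R) (W : 'M[R]_d) :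
  (2 <= d)%N ->
  symmx E ->
  (forall i j, `|E i j| <= a) ->
  sorted_eigenvalues (B^T *m B) s ->
  (B^T *m B) *m v = s`_0 *: v ->
  sqnorm v = 1 ->
  ksparse k v ->
  s`_0 - s`_1 > 0 ->
  optimal k (B^T *m B + E) W ->
  frob (W - v *m v^T) <=
    2 * a * k%:R / (s`_0 - s`_1) + Num.sqrt (2 * a * k%:R / (s`_0 - s`_1)).
Proof.
move=> d2 Esym Ea [cpM srt] Mv nv ksp gap [[trW1 [l1W psdW]] optW].
set M := B^T *m B in cpM Mv optW *.
have MT : M^T = M by rewrite /M trmx_mul trmxK.
have WT : W^T = W := psdW.1.
have gap' : s`_1 < s`_0 by rewrite -subr_gt0.
have [dr [q [k0 [trM trW alpha q0 [dk0 dk]]]]] :=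
  @spec_decomp R d M W v s MT cpM srt Mv nv gap' WT psdW.2.
set al := (v^T *m W *m v) 0 0 in alpha *.
have trMW : \tr (M *m W) <= s`_0 * al + s`_1 * (1 - al).
  have e1 : \sum_l dr l * q l = dr k0 * q k0 + \sum_(l | l != k0) dr l * q l.
    by rewrite (bigD1 k0).
  have e2 : \sum_l q l = q k0 + \sum_(l | l != k0) q l by rewrite (bigD1 k0).
  have h : \sum_(l | l != k0) dr l * q l <= s`_1 * \sum_(l | l != k0) q l.
    rewrite mulr_sumr; apply: ler_sum => l lk0.
    by apply: ler_wpM2r; [exact: q0 | exact: dk].
  rewrite trM e1 alpha -trW1 trW e2 dk0; lra.
set V := v *m v^T.
have vvE : forall i j, V i j = v i 0 * v j 0 by move=> i j; rewrite !mxE big_ord1 !mxE.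
have nv' : \sum_i v i 0 ^+ 2 = 1 := nv.
have trV : \tr V = 1.
  by rewrite -nv' /mxtrace; apply: eq_bigr => i _; rewrite vvE expr2.
pose c := fun i : 'I_d => ((v i 0 != 0)%:R : R).
have cv : forall i, c i * `|v i 0| = `|v i 0|.
  by move=> i; rewrite /c; case: eqP => [->|_] /=; rewrite ?normr0 ?mulr0 ?mul1r.
have c2 : forall i, c i ^+ 2 = c i by move=> i; rewrite /c; case: (v i 0 != 0); rewrite /= ?expr0n ?expr1n.
have c0 : forall i, 0 <= c i by move=> i; rewrite /c ler0n.
have sumc : \sum_i c i <= k%:R.
  have -> : \sum_i c i = (#|[set i : 'I_d | v i ord0 != 0]|)%:R.
    rewrite (eq_bigr (fun i => if v i 0 != 0 then 1 else 0)); last first.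
      by move=> i _; rewrite /c; case: (v i 0 != 0).
    rewrite -big_mkcond /= sumr_const; congr (_ *+ _).
    by apply: eq_card => i; rewrite !inE.
  by rewrite ler_nat.
have l1V : \sum_i \sum_j `|V i j| <= k%:R.
  have e : \sum_i \sum_j `|V i j| = (\sum_i c i * `|v i 0|) ^+ 2.
    rewrite expr2 mulr_suml; apply: eq_bigr => i _; rewrite mulr_sumr.
    by apply: eq_bigr => j _; rewrite vvE normrM !cv.
  rewrite e; apply: le_trans (@cs R _ c (fun i => `|v i 0|)) _.
  have -> : \sum_i `|v i 0| ^+ 2 = 1 by rewrite -nv'; apply: eq_bigr => i _; rewrite real_normK ?num_real.
  by rewrite mulr1 (eq_bigr _ (fun i _ => c2 i)).
have psdV : psd V.
  split; first by rewrite /symmx /V trmx_mul trmxK.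
  move=> x; rewrite /V mulmxA -mulmxA.
  have -> : v^T *m x = (x^T *m v)^T by rewrite trmx_mul trmxK.
  by move: (x^T *m v) => y; rewrite mxE big_ord1 mxE -expr2 sqr_ge0.
have feasV : feasible k V by split => //; split.
have opt := optW V feasV.
have trMV : \tr (M *m V) = s`_0.
  rewrite /V mulmxA mxtrace_mulC Mv -scalemxAr mxtraceZ trace_mx11 mxE.
  have -> : \sum_j (v^T) 0 j * v j 0 = 1 by rewrite -nv'; apply: eq_bigr => j _; rewrite mxE expr2.
  by rewrite mulr1.
set D := W - V.
have trED : \tr (E *m D) = \tr (E *m W) - \tr (E *m V) by rewrite /D mulmxBr raddfB.
have gt : (s`_0 - s`_1) * (1 - al) <= \tr (E *m D).
  move: opt; rewrite !mulmxDl !mxtraceD trMV trED => opt; lra.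
have a0 : 0 <= a.
  have i0 : 'I_d by exists 0%N; apply: leq_trans d2.
  by apply: le_trans (Ea i0 i0); apply: normr_ge0.
have trEa : \tr (E *m D) <= a * \sum_i \sum_j `|D i j|.
  rewrite exchange_big mulr_sumr /mxtrace; apply: ler_sum => i _.
  rewrite mxE mulr_sumr; apply: ler_sum => j _.
  apply: le_trans (ler_norm _) _; rewrite normrM.
  by apply: ler_wpM2r; [exact: normr_ge0 | exact: Ea].
set F2 := \sum_i \sum_j D i j ^+ 2.
have F2ge0 : 0 <= F2 by apply: sumr_ge0 => i _; apply: sumr_ge0 => j _; apply: sqr_ge0.
set f := frob D.
have fE : f = Num.sqrt F2 by [].
have f0 : 0 <= f by rewrite fE sqrtr_ge0.
have f2 : f ^+ 2 = F2 by rewrite fE sqr_sqrtr.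
have Dsplit : forall i j, `|D i j| <= `|W i j| + c i * c j * `|D i j|.
  move=> i j; rewrite /D eB vvE.
  have [vi0|vi0] := eqVneq (v i 0) 0.
    by rewrite /c vi0 eqxx /= !(mulr0n, mul0r, mulr0, subr0, addr0).
  have [vj0|vj0] := eqVneq (v j 0) 0.
    by rewrite /c vj0 eqxx /= !(mulr0n, mul0r, mulr0, subr0, addr0).
  rewrite /c vi0 vj0 /= !mulr1n !mul1r.
  by rewrite lerDr normr_ge0.
have CS2 : \sum_i \sum_j c i * c j * `|D i j| <= k%:R * f.
  apply: sq_le; first by apply: mulr_ge0 => //; apply: ler0n.
  rewrite pair_bigA /=.
  apply: le_trans (@cs R _ (fun p => c p.1 * c p.2) (fun p => `|D p.1 p.2|)) _.
  rewrite -(pair_bigA _ (fun i j => (c i * c j) ^+ 2)) -(pair_bigA _ (fun i j => `|D i j| ^+ 2)) /=.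
  have -> : \sum_i \sum_j (c i * c j) ^+ 2 = (\sum_i c i) ^+ 2.
    rewrite expr2 mulr_suml; apply: eq_bigr => i _; rewrite mulr_sumr.
    by apply: eq_bigr => j _; rewrite exprMn !c2.
  have -> : \sum_i \sum_j `|D i j| ^+ 2 = F2.
    by apply: eq_bigr => i _; apply: eq_bigr => j _; rewrite real_normK ?num_real.
  rewrite exprMn f2; apply: ler_wpM2r => //.
  rewrite lerXn2r ?nnegrE ?sumr_ge0 ?ler0n //.
have l1D : \sum_i \sum_j `|D i j| <= k%:R + k%:R * f.
  apply: le_trans (_ : \sum_i \sum_j (`|W i j| + c i * c j * `|D i j|) <= _).
    by apply: ler_sum => i _; apply: ler_sum => j _; apply: Dsplit.
  under eq_bigr do rewrite big_split /=.
  rewrite big_split /=; exact: lerD.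
have eal : \sum_i \sum_j W i j * (v i 0 * v j 0) = al.
  rewrite /al mxE exchange_big; apply: eq_bigr => j _ /=.
  rewrite mxE mulr_suml; apply: eq_bigr => i _; rewrite mxE; ring.
have evv : \sum_i \sum_j (v i 0 * v j 0) ^+ 2 = 1.
  rewrite -(expr1n _ 2) -nv' expr2 mulr_suml; apply: eq_bigr => i _; rewrite mulr_sumr.
  by apply: eq_bigr => j _; ring.
have fW := @frobW R d W psdW trW1.
have F2le : F2 <= 2 * (1 - al).
  have -> : F2 = \sum_i \sum_j W i j ^+ 2 - 2 * \sum_i \sum_j W i j * (v i 0 * v j 0)
                 + \sum_i \sum_j (v i 0 * v j 0) ^+ 2.
    rewrite mulr_sumr -sumrB -big_split /=; apply: eq_bigr => i _.
    rewrite mulr_sumr -sumrB -big_split /=; apply: eq_bigr => j _.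
    by rewrite /D eB vvE; ring.
  rewrite eal evv; lra.
set g := s`_0 - s`_1.
set del := 2 * a * k%:R / g.
have del0 : 0 <= del.
  rewrite /del; apply: divr_ge0; last exact: ltW.
  by apply: mulr_ge0; [apply: mulr_ge0 => // | exact: ler0n].
have key : f ^+ 2 <= del * (1 + f).
  have h1 : g * f ^+ 2 <= 2 * a * k%:R * (1 + f).
    have : g * (1 - al) <= a * (k%:R + k%:R * f) by apply: le_trans gt _; apply: le_trans trEa _; apply: ler_wpM2l.
    rewrite f2 => h; have := ler_wpM2l (ltW gap) F2le; rewrite -/g; nra.
  rewrite /del mulrAC ler_pdivlMr // mulrC //.
have r0 := sqrtr_ge0 del.
have r2 : Num.sqrt del ^+ 2 = del by rewrite sqr_sqrtr.
rewrite -/D -/f -/g -/del.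
rewrite -{1}r2; apply: final_ineq => //; rewrite r2; exact: key.
Qed.
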